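(* Let $V$ and $W$ be oriented $d$-dimensional inner-product spaces. Then for every $A\in\mathrm{Hom}(V,W)$, \[ \mathrm{dist}^2(A,\mathrm{SO}(V,W))\le\mathrm{dist}^2(A,\mathrm{O}(V,W))+4|\det A|^{1/d}\,\mathbf{1}_{\{\det A<0\}}. \]
   Context: $\mathrm{O}(V,W)$ is the set of linear isometries $V\to W$, and $\mathrm{SO}(V,W)$ is the subset of orientation-preserving ones. $\det A$ is the determinant of the matrix of $A$ with respect to positively oriented orthonormal bases of $V$ and $W$. Distances are measured in the Frobenius (Hilbert–Schmidt) norm. $\mathbf{1}_{\{\det A<0\}}$ equals $1$ if $\det A<0$ and $0$ otherwise. *)

(* Defs.v *)
From HB Require Import structures.
From mathcomp Require Import all_boot all_order all_algebra.
From mathcomp Require Import all_classical all_reals.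
From mathcomp Require Import exp.
Set Implicit Arguments. Unset Strict Implicit. Unset Printing Implicit Defensive.
Import Order.TTheory GRing.Theory Num.Theory.
Local Open Scope ring_scope.
Local Open Scope classical_set_scope.

(* Matrices w.r.t. positively oriented orthonormal bases of V and W. *)
Definition orth_set (R : realType) (d : nat) : set 'M[R]_d :=
  [set Q | Q *m Q^T = 1%:M].
Definition sorth_set (R : realType) (d : nat) : set 'M[R]_d :=
  [set Q | Q *m Q^T = 1%:M /\ \det Q = 1].

Definition frob (R : realType) (d : nat) (A : 'M[R]_d) : R :=
  Num.sqrt (\sum_(i < d) \sum_(j < d) A i j ^+ 2).

Definition mdist (R : realType) (d : nat) (A : 'M[R]_d) (S : set 'M[R]_d) : R :=
  inf [set frob (A - Q) | Q in S].

(* Main.v *)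
From Pilot Require Import Defs.
From HB Require Import structures.
From mathcomp Require Import all_boot all_order all_algebra.
From mathcomp Require Import all_classical all_reals.
From mathcomp Require Import exp.
From mathcomp Require Import topology normedtype derive.
From mathcomp Require Import ring lra.
Import Pilot.Defs.
Import Order.TTheory GRing.Theory Num.Theory.
Import numFieldTopology.Exports numFieldNormedType.Exports.
Local Open Scope classical_set_scope.
Local Open Scope ring_scope.
Set Implicit Arguments. Unset Strict Implicit. Unset Printing Implicit Defensive.
Definition orth (R : realType) n (Q : 'M[R]_n) := Q *m Q^T = 1%:M.
Definition form (R : realType) n (B : 'M[R]_n) (x y : 'cV[R]_n) : R :=
  (x^T *m B *m y) 0 0.
Definition hh (R : realType) n (w : 'cV[R]_n) : 'M[R]_n :=
  1%:M - (2 / form 1%:M w w) *: (w *m w^T).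
Definition ev (R : realType) n (i : 'I_n) : 'cV[R]_n := delta_mx i 0.
Arguments ev {R n} i.

Lemma orthTM (R : realType) n (Q : 'M[R]_n) : orth Q -> Q^T *m Q = 1%:M.
Proof. by move=> /mulmx1C. Qed.

Lemma orth1 (R : realType) n : orth (1%:M : 'M[R]_n).
Proof. by rewrite /orth trmx1 mulmx1. Qed.

Lemma orthM (R : realType) n (P Q : 'M[R]_n) : orth P -> orth Q -> orth (P *m Q).
Proof.
rewrite /orth => hP hQ; rewrite trmx_mul mulmxA -(mulmxA P) hQ mulmx1 //.
Qed.

Lemma orthT (R : realType) n (Q : 'M[R]_n) : orth Q -> orth Q^T.
Proof. by move=> h; rewrite /orth trmxK orthTM. Qed.

Lemma det_orth (R : realType) n (Q : 'M[R]_n) : orth Q -> \det Q = 1 \/ \det Q = -1.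
Proof.
move=> h; have : \det Q ^+ 2 = 1.
  by rewrite expr2 -{2}det_tr -det_mulmx h det1.
move/eqP; rewrite sqrf_eq1 => /orP [/eqP -> | /eqP ->]; by [left | right].
Qed.

Lemma form_sym (R : realType) n (B : 'M[R]_n) x y : form B x y = form B^T y x.
Proof.
have h (M : 'M[R]_1) : M 0 0 = M^T 0 0 by rewrite mxE.
by rewrite /form [LHS]h !trmx_mul trmxK mulmxA.
Qed.

Lemma form1C (R : realType) n (x y : 'cV[R]_n) : form 1%:M x y = form 1%:M y x.
Proof. by rewrite form_sym trmx1. Qed.

Lemma formDl (R : realType) n (B : 'M[R]_n) x y z : form B (x + y) z = form B x z + form B y z.
Proof. by rewrite /form linearD /= !mulmxDl mxE. Qed.
Lemma formDr (R : realType) n (B : 'M[R]_n) x y z : form B z (x + y) = form B z x + form B z y.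
Proof. by rewrite /form !mulmxDr mxE. Qed.
Lemma formZl (R : realType) n (B : 'M[R]_n) a x y : form B (a *: x) y = a * form B x y.
Proof. by rewrite /form linearZ /= -!scalemxAl mxE. Qed.
Lemma formZr (R : realType) n (B : 'M[R]_n) a x y : form B x (a *: y) = a * form B x y.
Proof. by rewrite /form -!scalemxAr mxE. Qed.
Lemma formNl (R : realType) n (B : 'M[R]_n) x y : form B (- x) y = - form B x y.
Proof. by rewrite -scaleN1r formZl mulN1r. Qed.
Lemma formNr (R : realType) n (B : 'M[R]_n) x y : form B x (- y) = - form B x y.
Proof. by rewrite -scaleN1r formZr mulN1r. Qed.
Lemma formBl (R : realType) n (B : 'M[R]_n) x y z : form B (x - y) z = form B x z - form B y z.
Proof. by rewrite formDl formNl. Qed.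
Lemma formBr (R : realType) n (B : 'M[R]_n) x y z : form B z (x - y) = form B z x - form B z y.
Proof. by rewrite formDr formNr. Qed.

Lemma form_ev (R : realType) n (B : 'M[R]_n) i j : form B (ev i) (ev j) = B i j.
Proof.
rewrite /form /ev trmx_delta -rowE -colE.
by rewrite !mxE.
Qed.

Lemma form_mulmx (R : realType) n (B P : 'M[R]_n) x y :
  form (P^T *m B *m P) x y = form B (P *m x) (P *m y).
Proof. by rewrite /form trmx_mul !mulmxA. Qed.

Lemma form1_ev (R : realType) n (i j : 'I_n) : form 1%:M (ev (R:=R) i) (ev j) = (i == j)%:R.
Proof. by rewrite form_ev mxE. Qed.

Lemma tr_outer (R : realType) n (B : 'M[R]_n) x y : \tr (x *m y^T *m B) = form B y x.
Proof.
by rewrite -mulmxA mxtrace_mulC /form /mxtrace big_ord1.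
Qed.

Lemma outer_mul (R : realType) n (x y z w : 'cV[R]_n) :
  (x *m y^T) *m (z *m w^T) = form 1%:M y z *: (x *m w^T).
Proof.
rewrite mulmxA -(mulmxA x) (mx11_scalar (y^T *m z)) mul_mx_scalar -scalemxAl.
by rewrite /form mulmx1.
Qed.

Lemma form1E (R : realType) n (w : 'cV[R]_n) : form 1%:M w w = \sum_i w i 0 ^+ 2.
Proof.
rewrite /form mulmx1 mxE; apply: eq_bigr => i _; by rewrite mxE expr2.
Qed.

Lemma form1_ge0 (R : realType) n (w : 'cV[R]_n) : 0 <= form 1%:M w w.
Proof. rewrite form1E; apply: sumr_ge0 => i _; exact: sqr_ge0. Qed.

Lemma form1_eq0 (R : realType) n (w : 'cV[R]_n) : form 1%:M w w = 0 -> w = 0.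
Proof.
rewrite form1E => /eqP; rewrite psumr_eq0; last by move=> i _; exact: sqr_ge0.
move=> /allP h; apply/matrixP => i j; rewrite (ord1 j) mxE.
by have /(_ (mem_index_enum i)) := h i; rewrite implyTb sqrf_eq0 => /eqP.
Qed.

Lemma hh_sym (R : realType) n (w : 'cV[R]_n) : (hh w)^T = hh w.
Proof. by rewrite /hh linearB /= linearZ /= trmx1 trmx_mul trmxK. Qed.

Lemma hh_orth (R : realType) n (w : 'cV[R]_n) : form 1%:M w w != 0 -> orth (hh w).
Proof.
move=> q0; rewrite /orth hh_sym {1}/hh mulmxBl mul1mx /hh mulmxBr mulmx1.
rewrite -scalemxAl -scalemxAr outer_mul !scalerA.
move: (w *m w^T) => W; set q := form 1%:M w w.
have -> : 2 / q * (2 / q) * q = 2 / q + 2 / q by field.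
by rewrite scalerDl; apply/matrixP => i j; rewrite !mxE; ring.
Qed.

Lemma hh_e (R : realType) n (e v : 'cV[R]_n) : form 1%:M e e = 1 -> form 1%:M v v = 1 ->
  form 1%:M (e - v) (e - v) != 0 -> hh (e - v) *m e = v.
Proof.
move=> he hv q0; rewrite /hh mulmxBl mul1mx -scalemxAl -mulmxA.
rewrite (mx11_scalar ((e - v)^T *m e)) mul_mx_scalar scalerA.
have -> : ((e - v)^T *m e) 0 0 = form 1%:M (e - v) e by rewrite /form mulmx1.
move: q0; rewrite !formBl !formBr he hv (form1C e v) => q0.
have -> : 2 / (1 - form 1%:M v e - (form 1%:M v e - 1)) * (1 - form 1%:M v e) = 1.
  by field; move: q0; apply: contra => /eqP h; apply/eqP; rewrite -h; ring.
by rewrite scale1r opprB addrC subrK.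
Qed.

Lemma tr_hh (R : realType) n (u : 'cV[R]_n) (B : 'M[R]_n) :
  \tr (hh u *m B) = \tr B - (2 / form 1%:M u u) * form B u u.
Proof.
by rewrite /hh mulmxBl mul1mx -scalemxAl linearB /= linearZ /= tr_outer.
Qed.

Lemma det_hh_ev0 (R : realType) n : \det (hh (ev (R:=R) (0 : 'I_n.+1))) = -1.
Proof.
have -> : hh (ev (R:=R) (0 : 'I_n.+1)) =
   diag_mx (\row_(i < n.+1) (if i == 0 then -1 else 1)).
  apply/matrixP => i j; rewrite /hh form1_ev eqxx divr1 !mxE big_ord1 !mxE /=.
  have -> : (ord0 == 0 :> 'I_1) by [].
  rewrite !andbT; case: (i =P 0) => [->|i0]; case: (j =P 0) => [->|j0] //=.
  - by rewrite mulr1 mulr1n; ring.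
  - rewrite !mulr0 subr0; case: (0 =P j) => // h; by case: j0.
  - by rewrite mul0r mulr0 subr0.
  - by rewrite mul0r mulr0 subr0.
rewrite det_diag big_ord_recl !mxE eqxx big1 ?mulr1 // => i _; rewrite !mxE.
by rewrite eq_sym (negbTE (neq_lift _ _)).
Qed.

Lemma mx11_mul (R : realType) (M N : 'M[R]_1) : (M *m N) 0 0 = M 0 0 * N 0 0.
Proof. by rewrite mxE big_ord1. Qed.

Lemma form_hhl (R : realType) n (e x y : 'cV[R]_n) (B : 'M[R]_n) :
  form (hh e *m B) x y = form B x y - (2 / form 1%:M e e) * (form 1%:M x e * form B e y).
Proof.
rewrite /hh mulmxBl mul1mx /form mulmxBr mulmxBl mxE; congr (_ + _); rewrite mxE; congr (- _).
rewrite -scalemxAl -scalemxAr -scalemxAl mxE; congr (_ * _).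
rewrite mulmx1 -mx11_mul !mulmxA //.
Qed.

Lemma tr_hh2 (R : realType) n (e v : 'cV[R]_n) (B : 'M[R]_n) :
  form 1%:M e e = 1 -> form 1%:M v v = 1 ->
  \tr ((hh e *m hh v)^T *m B) =
  \tr B - 2 * form B e e - 2 * form B v v + 4 * (form 1%:M v e * form B e v).
Proof.
move=> he hv; rewrite trmx_mul !hh_sym -mulmxA tr_hh form_hhl tr_hh he hv.
rewrite !divr1; ring.
Qed.

Lemma rot_lemma (R : realType) (a b : R) :
  (forall c s : R, c ^+ 2 + s ^+ 2 = 1 -> 0 <= a * s ^+ 2 + b * (c * s)) -> b = 0.
Proof.
move=> h; apply/eqP; apply/negPn/negP => b0.
pose K := 2 * `|a| + `|b| + 1.
have K0 : 0 < K by rewrite /K; have := normr_ge0 a; have := normr_ge0 b; lra.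
pose t := - b / K.
have t2 : 0 < 1 + t ^+ 2 by have := sqr_ge0 t; lra.
have := h ((1 - t ^+ 2) / (1 + t ^+ 2)) (2 * t / (1 + t ^+ 2)).
have -> : ((1 - t ^+ 2) / (1 + t ^+ 2)) ^+ 2 + (2 * t / (1 + t ^+ 2)) ^+ 2 = 1.
  by field; rewrite gt_eqF.
move=> /(_ erefl).
have -> : a * (2 * t / (1 + t ^+ 2)) ^+ 2 + b * ((1 - t ^+ 2) / (1 + t ^+ 2) * (2 * t / (1 + t ^+ 2)))
   = (2 * t) * (2 * a * t + b * (1 - t ^+ 2)) / (1 + t ^+ 2) ^+ 2.
  by field; rewrite gt_eqF.
rewrite pmulr_lge0 ?invr_gt0 ?exprn_gt0 //.
have bK : `|b| < K by rewrite /K; have := normr_ge0 a; lra.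
have hb : 0 < b ^+ 2 by rewrite exprn_even_gt0.
rewrite /t.
have -> : 2 * (- b / K) * (2 * a * (- b / K) + b * (1 - (- b / K) ^+ 2)) =
   (2 * b ^+ 2 / K ^+ 3) * (2 * a * K - K ^+ 2 + b ^+ 2).
  by field; rewrite gt_eqF.
rewrite pmulr_rge0; last by apply: divr_gt0; [apply: mulr_gt0 | apply: exprn_gt0].
apply/negP; rewrite -ltNge.
have aK : 2 * a <= 2 * `|a| by have := ler_norm a; lra.
have hb2 : b ^+ 2 = `|b| ^+ 2 by rewrite real_normK ?num_real.
have na := normr_ge0 a; have nb := normr_ge0 b.
have h1 : 2 * a * K <= 2 * `|a| * K by rewrite ler_pM2r.
rewrite hb2 /K; rewrite /K in h1; nra.
Qed.

Lemma ring_aux1 (T : comNzRingType) (c s a1 a2 a3 a4 : T) :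
  c * (c * a1 + s * a2) + s * (c * a3 + s * a4) =
  c ^+ 2 * a1 + c * s * (a2 + a3) + s ^+ 2 * a4.
Proof. ring. Qed.

Lemma ring_aux2 (T : comNzRingType) (c s a1 a2 a3 a4 t : T) :
  c ^+ 2 + s ^+ 2 = 1 ->
  t - (t - 2 * a1 - 2 * (c ^+ 2 * a1 + c * s * (a2 + a3) + s ^+ 2 * a4) +
     4 * (c * (c * a1 + s * a2))) =
  2 * (a1 + a4) * s ^+ 2 + 2 * (a3 - a2) * (c * s).
Proof.
move=> h; have -> : t - (t - 2 * a1 - 2 * (c ^+ 2 * a1 + c * s * (a2 + a3) + s ^+ 2 * a4) +
     4 * (c * (c * a1 + s * a2))) = 2 * a1 * (1 - c ^+ 2) + 2 * a4 * s ^+ 2 + 2 * (a3 - a2) * (c * s) by ring.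
rewrite -h; ring.
Qed.

Lemma ring_aux3 (T : comNzRingType) (c s a1 a2 a4 : T) :
  c ^+ 2 + s ^+ 2 = 1 ->
  c ^+ 2 * a1 + c * s * a2 + s ^+ 2 * a4 - a1 = (a4 - a1) * s ^+ 2 + a2 * (c * s).
Proof.
move=> h; rewrite -{2}(mul1r a1) -h; ring.
Qed.

Lemma form_cs (R : realType) n (B : 'M[R]_n) (i j : 'I_n) (c s : R) :
  form B (c *: ev i + s *: ev j) (c *: ev i + s *: ev j) =
  c ^+ 2 * B i i + c * s * (B i j + B j i) + s ^+ 2 * B j j.
Proof. rewrite !(formDl, formDr, formZl, formZr) !form_ev; exact: ring_aux1. Qed.

Lemma form1_cs (R : realType) n (i j : 'I_n) (c s : R) : i != j ->
  form 1%:M (c *: ev i + s *: ev j) (c *: ev i + s *: ev j) = c ^+ 2 + s ^+ 2.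
Proof.
move=> ij; rewrite form_cs !mxE eqxx (negbTE ij) eq_sym (negbTE ij).
by rewrite eqxx /= addr0 mulr0 addr0 !mulr1.
Qed.

Definition Opt (R : realType) n (B : 'M[R]_n) :=
  forall Q, orth Q -> \tr (Q^T *m B) <= \tr B.

Lemma opt_sym (R : realType) n (B : 'M[R]_n) (i j : 'I_n) : i != j -> Opt B -> B i j = B j i.
Proof.
move=> ij hB.
suff : 2 * (B j i - B i j) = 0 by move=> h; apply/eqP; rewrite -subr_eq0; apply/eqP; lra.
apply: (rot_lemma (a := 2 * (B i i + B j j))) => c s hcs.
pose v := c *: ev i + s *: ev j.
have hv : form 1%:M v v = 1 by rewrite form1_cs.
have he : form 1%:M (ev (R:=R) i) (ev i) = 1 by rewrite form1_ev eqxx.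
have := hB _ (orthM (hh_orth _) (hh_orth _)).
move=> /(_ (ev i) v); rewrite he hv oner_eq0 => /(_ isT isT).
rewrite tr_hh2 // form_cs form_ev /v !(formDl, formDr, formZl, formZr) !form_ev.
rewrite !mxE eqxx eq_sym (negbTE ij) mulr0 addr0 mulr1.
move: (B i i) (B i j) (B j i) (B j j) (\tr B) => a1 a2 a3 a4 t.
rewrite -subr_ge0 (ring_aux2 _ _ _ _ _ hcs) //.
Qed.

Lemma min_sym (R : realType) n (B : 'M[R]_n) (i j : 'I_n) : i != j ->
  (forall v, form 1%:M v v = 1 -> B i i <= form B v v) -> B i j + B j i = 0.
Proof.
move=> ij hB.
apply: (rot_lemma (a := B j j - B i i)) => c s hcs.
have := hB (c *: ev i + s *: ev j); rewrite form1_cs // => /(_ hcs).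
rewrite form_cs -subr_ge0.
move: (B i i) (B i j + B j i) (B j j) => a1 a2 a4.
by rewrite (ring_aux3 _ _ _ hcs).
Qed.

Definition mk (R : realType) n (v : 'rV[R]_(n * n)) : 'M[R]_n :=
  \matrix_(i, j) v 0 (mxvec_index i j).

Lemma mk_mxvec (R : realType) n (Q : 'M[R]_n) : mk (mxvec Q) = Q.
Proof. by apply/matrixP => i j; rewrite mxE mxvecE. Qed.

Lemma cont_coord (R : realType) n i j :
  continuous (fun v : 'rV[R]_(n * n) => mk v i j).
Proof.
have -> : (fun v : 'rV[R]_(n * n) => mk v i j) = (fun v => v 0 (mxvec_index i j)).
  by apply: funext => v; rewrite mxE.
exact: coord_continuous.
Qed.

Lemma cont_sum (R : realType) (T : topologicalType) k (F : 'I_k -> T -> R) :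
  (forall i, continuous (F i)) -> continuous (fun x => \sum_i F i x).
Proof.
elim: k F => [|k IH] F hF.
  have -> : (fun x => \sum_(i < 0) F i x) = (fun _ => 0) by apply: funext => x; rewrite big_ord0.
  exact: cst_continuous.
have -> : (fun x => \sum_(i < k.+1) F i x) =
    ((fun x => \sum_(i < k) F (widen_ord (leqnSn k) i) x) + F ord_max)%R.
  by apply: funext => x; rewrite big_ord_recr.
move=> x; apply: continuousD.
  by apply: (IH (fun i => F (widen_ord (leqnSn k) i))) => i; apply: hF.
exact: hF.
Qed.

Lemma cont_mul (R : realType) (T : topologicalType) (f g : T -> R) :
  continuous f -> continuous g -> continuous (fun x => f x * g x).
Proof. move=> hf hg x; apply: (@continuousM R T f g x); [exact: hf | exact: hg]. Qed.

Lemma cont_prod_entry (R : realType) n i j :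
  continuous (fun v : 'rV[R]_(n * n) => (mk v *m (mk v)^T) i j).
Proof.
have -> : (fun v : 'rV[R]_(n * n) => (mk v *m (mk v)^T) i j) =
   (fun v => \sum_k (mk v i k * mk v j k)).
  by apply: funext => v; rewrite mxE; apply: eq_bigr => k _; rewrite [(mk v)^T k j]mxE.
by apply: cont_sum => k; apply: cont_mul; apply: cont_coord.
Qed.

Lemma orth_entry (R : realType) n (Q : 'M[R]_n) i j : orth Q -> `|Q i j| <= 1.
Proof.
move=> hQ; have : (Q *m Q^T) i i = 1 by rewrite hQ mxE eqxx.
rewrite mxE (bigD1 j) //= => h.
have h2 : Q i j ^+ 2 <= 1.
  rewrite -h mxE expr2 lerDl; apply: sumr_ge0 => k _; rewrite mxE -expr2; exact: sqr_ge0.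
by rewrite -(expr_le1 (n := 2)) // real_normK ?num_real.
Qed.

Lemma orth_compact (R : realType) n :
  compact [set v : 'rV[R]_(n * n) | orth (mk v)].
Proof.
apply: bounded_closed_compact.
  rewrite /bounded_near /=; near=> M.
  have M1 : 1 <= M by near: M; apply: nbhs_pinfty_ge; rewrite num_real.
  move=> v /= hv.
  rewrite [leLHS]/Num.norm /= mx_normrE; apply: bigmax_le => [|[a k] _] /=.
    exact: le_trans M1.
  case: (mxvec_indexP k) => i j; rewrite (_ : v a (mxvec_index i j) = mk v i j); last first.
    by rewrite mxE (ord1 a).
  exact: (le_trans (orth_entry i j hv)).
have -> : [set v : 'rV[R]_(n * n) | orth (mk v)] =
   \bigcap_(p in [set: 'I_n * 'I_n])
      ((fun v : 'rV[R]_(n * n) => (mk v *m (mk v)^T) p.1 p.2) @^-1` [set x | x = (1%:M : 'M[R]_n) p.1 p.2]).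
  apply/seteqP; split => v /=.
    by move=> hv [i j] _ /=; rewrite hv.
  by move=> h; apply/matrixP => i j; exact: (h (i, j)).
apply: closed_bigI => p _; apply: preimage_closed; last exact: closed_eq.
by move=> x _; apply: cont_prod_entry.
Unshelve. all: end_near.
Qed.

Lemma orth_min (R : realType) n (f : 'M[R]_n -> R) :
  continuous (fun v : 'rV[R]_(n * n) => f (mk v)) ->
  exists2 Q, orth Q & forall P, orth P -> f Q <= f P.
Proof.
move=> hf.
have ne : [set v : 'rV[R]_(n * n) | orth (mk v)] !=set0.
  by exists (mxvec 1%:M); rewrite /= mk_mxvec; exact: orth1.
have [c /set_mem hc hmin] := compact_EVT_min ne (@orth_compact R n) (continuous_subspaceT hf).
exists (mk c) => // P hP; have := hmin (mxvec P); rewrite mk_mxvec; apply.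
by apply/mem_set; rewrite /= mk_mxvec.
Qed.

Lemma formE (R : realType) n (B : 'M[R]_n) x y :
  form B x y = \sum_k \sum_l x k 0 * B k l * y l 0.
Proof.
rewrite /form mxE exchange_big; apply: eq_bigr => k _; rewrite mxE mulr_suml.
by apply: eq_bigr => i _; rewrite mxE.
Qed.

Lemma mul_ev (R : realType) n (P : 'M[R]_n) j k : (P *m ev j) k 0 = P k j.
Proof. by rewrite /ev -colE mxE. Qed.

Lemma ext_orth (R : realType) n (e w : 'cV[R]_n) : form 1%:M e e = 1 -> form 1%:M w w = 1 ->
  exists2 Q, orth Q & Q *m e = w.
Proof.
move=> he hw; have [->|ne] := eqVneq w e; first by exists 1%:M; [exact: orth1 | rewrite mul1mx].
have q0 : form 1%:M (e - w) (e - w) != 0.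
  apply/eqP => /form1_eq0 /eqP; rewrite subr_eq0 eq_sym; exact/negP.
by exists (hh (e - w)); [exact: hh_orth | exact: hh_e].
Qed.

Lemma form_block (R : realType) n1 n2 (A1 : 'M[R]_n1) A2 A3 (A4 : 'M[R]_n2) (y z : 'cV[R]_n2) :
  form (block_mx A1 A2 A3 A4) (col_mx 0 y) (col_mx 0 z) = form A4 y z.
Proof.
rewrite /form tr_col_mx trmx0 mul_row_block mul_row_col mulmx0 add0r.
by rewrite (mul0mx _ A2) add0r.
Qed.

Lemma orth_block (R : realType) n (Q : 'M[R]_n) : orth Q ->
  orth (block_mx (1%:M : 'M[R]_1) 0 0 Q).
Proof.
rewrite /orth => hQ; rewrite tr_block_mx trmx1 !trmx0 mulmx_block.
rewrite !mulmx0 !mul0mx !addr0 !add0r mulmx1 hQ -scalar_mx_block //.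
Qed.

Lemma tr_block_opt (R : realType) n (Q : 'M[R]_n) (A1 : 'M[R]_1) A2 A3 (C : 'M[R]_n) :
  \tr ((block_mx (1%:M : 'M[R]_1) 0 0 Q)^T *m block_mx A1 A2 A3 C) = \tr A1 + \tr (Q^T *m C).
Proof.
rewrite tr_block_mx trmx1 !trmx0 mulmx_block mxtrace_block.
by rewrite !mul0mx !add0r mul1mx addr0.
Qed.

Lemma lshift0 n : lshift n (0 : 'I_1) = (0 : 'I_n.+1).
Proof. exact: val_inj. Qed.

Lemma keyL (R : realType) n : forall (B : 'M[R]_n) (m : R), Opt B -> 0 <= m ->
  (forall v, form 1%:M v v = 1 -> m <= form B v v) -> m ^+ n <= \det B.
Proof.
elim: n => [|n IH] B m hB m0 hv; first by rewrite expr0 det_mx00.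
have e0u : form 1%:M (ev (R:=R) (0 : 'I_n.+1)) (ev 0) = 1 by rewrite form1_ev eqxx.
pose f (P : 'M[R]_n.+1) := form B (P *m ev 0) (P *m ev 0).
have [P0 hP0 P0min] : exists2 Q, orth Q & forall P, orth P -> f Q <= f P.
  apply: orth_min.
  have -> : (fun v => f (mk v)) =
      (fun v => \sum_k \sum_l (mk v k 0 * B k l) * mk v l 0).
    by apply: funext => v; rewrite /f formE; apply: eq_bigr => k _;
      apply: eq_bigr => l _; rewrite !mul_ev.
  apply: cont_sum => k; apply: cont_sum => l; apply: cont_mul; last exact: cont_coord.
  apply: cont_mul; [exact: cont_coord | exact: cst_continuous].
have P0T := orthTM hP0.
pose B' : 'M[R]_(1 + n) := P0^T *m B *m P0.
have hB'form : forall x y, form B' x y = form B (P0 *m x) (P0 *m y).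
  by move=> x y; rewrite /B' form_mulmx.
have unitP0 : forall v, form 1%:M v v = 1 -> form 1%:M (P0 *m v) (P0 *m v) = 1.
  by move=> v; rewrite -form_mulmx mulmx1 P0T.
have optB' : Opt B'.
  move=> Q hQ; rewrite /B'.
  have -> : \tr (Q^T *m (P0^T *m B *m P0)) = \tr ((P0 *m Q *m P0^T)^T *m B).
    rewrite !trmx_mul trmxK !mulmxA mxtrace_mulC !mulmxA //.
  have -> : \tr (P0^T *m B *m P0) = \tr B by rewrite mxtrace_mulC mulmxA hP0 mul1mx.
  by apply: hB; apply: orthM (orthM hP0 hQ) (orthT hP0).
have minB' : forall v, form 1%:M v v = 1 -> B' 0 0 <= form B' v v.
  move=> v hv1; rewrite -form_ev !hB'form.
  have [Q hQ hQe] := ext_orth e0u (unitP0 v hv1).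
  by have := P0min Q hQ; rewrite /f hQe.
have detB' : \det B = \det B'.
  rewrite /B' !det_mulmx mulrAC -det_mulmx P0T det1 mul1r //.
clearbody B'.
have hdl : forall j : 'I_n, B' (rshift 1 j) 0 = 0.
  move=> j; have ne : (0 : 'I_n.+1) != rshift 1 j by [].
  have h1 := opt_sym ne optB'; have h2 := min_sym ne minB'.
  by move: h2; rewrite h1; move: (B' (rshift 1 j) 0) => x; lra.
have hdlB : dlsubmx B' = 0.
  by apply/matrixP => i j; rewrite !mxE (ord1 j) lshift0 hdl.
have hdet : \det B = B' 0 0 * \det (drsubmx B').
  rewrite detB' -[in LHS](submxK B') hdlB det_ublock det_mx11 !mxE lshift0 //.
have optC : Opt (drsubmx B').
  move=> Q hQ; have := optB' _ (orth_block hQ).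
  by rewrite -(submxK B') hdlB block_mxKdr tr_block_opt mxtrace_block lerD2l.
have hC : forall u, form 1%:M u u = 1 -> m <= form (drsubmx B') u u.
  move=> u hu.
  have hv1 : form 1%:M (col_mx 0 u : 'cV[R]_(1 + n)) (col_mx 0 u) = 1.
    by rewrite (scalar_mx_block 1 n (1 : R)) form_block.
  have -> : form (drsubmx B') u u = form B' (col_mx 0 u) (col_mx 0 u).
    by rewrite -[in RHS](submxK B') form_block.
  by rewrite hB'form; apply: hv; apply: unitP0.
have := IH (drsubmx B') m optC m0 hC => hIH.
have mB : m <= B' 0 0.
  rewrite -form_ev hB'form; apply: hv; apply: unitP0; exact: e0u.
rewrite exprS hdet; apply: ler_pM => //; exact: exprn_ge0.
Qed.

Lemma frob2 (R : realType) d (X : 'M[R]_d) : frob X ^+ 2 = \tr (X^T *m X).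
Proof.
rewrite /frob sqr_sqrtr; last by apply: sumr_ge0 => i _; apply: sumr_ge0 => j _; exact: sqr_ge0.
rewrite /mxtrace exchange_big; apply: eq_bigr => j _; rewrite mxE.
by apply: eq_bigr => i _; rewrite mxE expr2.
Qed.

Lemma frob_orth (R : realType) d (A Q : 'M[R]_d) : orth Q ->
  frob (A - Q) ^+ 2 = \tr (A^T *m A) - 2 * \tr (Q^T *m A) + d%:R.
Proof.
move=> hQ; rewrite frob2.
have -> : (A - Q)^T = A^T - Q^T by rewrite linearB.
rewrite mulmxBl !mulmxBr (orthTM hQ) !linearB /= mxtrace1.
rewrite -[\tr (A^T *m Q)]mxtrace_tr trmx_mul trmxK.
move: (\tr (A^T *m A)) (\tr (Q^T *m A)) => a b.
rewrite opprK; move: (1 *+ d) => c; lra.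
Qed.

Lemma frob_ge0 (R : realType) d (X : 'M[R]_d) : 0 <= frob X.
Proof. exact: sqrtr_ge0. Qed.

Lemma mdist_ge0 (R : realType) d (A : 'M[R]_d) (S : set 'M[R]_d) : S !=set0 -> 0 <= mdist A S.
Proof.
move=> [Q hQ]; apply: lb_le_inf; first by exists (frob (A - Q)); exists Q.
by move=> _ [P _ <-]; exact: frob_ge0.
Qed.

Lemma mdist_le (R : realType) d (A Q : 'M[R]_d) (S : set 'M[R]_d) : S Q -> mdist A S <= frob (A - Q).
Proof.
move=> hQ; apply: ge_inf; last by exists Q.
by exists 0 => _ [P _ <-]; exact: frob_ge0.
Qed.

Lemma min_form (R : realType) n (B : 'M[R]_n.+1) :
  exists2 P, orth P & forall v, form 1%:M v v = 1 ->
    form B (P *m ev 0) (P *m ev 0) <= form B v v.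
Proof.
have e0u : form 1%:M (ev (R:=R) (0 : 'I_n.+1)) (ev 0) = 1 by rewrite form1_ev eqxx.
pose f (P : 'M[R]_n.+1) := form B (P *m ev 0) (P *m ev 0).
have [P0 hP0 P0min] : exists2 Q, orth Q & forall P, orth P -> f Q <= f P.
  apply: orth_min.
  have -> : (fun v => f (mk v)) =
      (fun v => \sum_k \sum_l (mk v k 0 * B k l) * mk v l 0).
    by apply: funext => v; rewrite /f formE; apply: eq_bigr => k _;
      apply: eq_bigr => l _; rewrite !mul_ev.
  apply: cont_sum => k; apply: cont_sum => l; apply: cont_mul; last exact: cont_coord.
  apply: cont_mul; [exact: cont_coord | exact: cst_continuous].
exists P0 => // v hv.
have [Q hQ hQe] := ext_orth e0u hv.
by have := P0min Q hQ; rewrite /f hQe.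
Qed.

Lemma hh_conj (R : realType) n (P : 'M[R]_n) (e : 'cV[R]_n) : orth P ->
  hh (P *m e) = P *m hh e *m P^T.
Proof.
move=> hP; rewrite /hh -form_mulmx mulmx1 (orthTM hP).
rewrite mulmxBr mulmx1 mulmxBl.
have -> : P *m P^T = 1%:M by [].
by rewrite -scalemxAr -scalemxAl trmx_mul !mulmxA.
Qed.

Lemma det_hh_P (R : realType) n (P : 'M[R]_n.+1) : orth P ->
  \det (hh (P *m ev 0)) = -1.
Proof.
move=> hP; rewrite hh_conj // !det_mulmx det_hh_ev0 mulrAC -det_mulmx hP det1.
by rewrite mul1r.
Qed.

Unset Implicit Arguments.

Theorem lemmaA5 (R : realType) (d : nat) (A : 'M[R]_d) :
  mdist A (@sorth_set R d) ^+ 2 <=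
    mdist A (@orth_set R d) ^+ 2
    + 4 * (`|\det A| `^ (d%:R^-1)) * (if \det A < 0 then 1 else 0).
Proof.
case: d A => [|n] A;
set extra := 4 * _ * _;
(have extra0 : 0 <= extra by
  rewrite /extra; apply: mulr_ge0; [apply: mulr_ge0 => //; exact: powR_ge0 | by case: ifP]).
  have -> : @sorth_set R 0 = @orth_set R 0.
    apply/seteqP; split => Q /=; first by case.
    by move=> h; split => //; exact: det_mx00.
  by rewrite lerDl.
have [Qs hQs Qmax] : exists2 Q, orth Q &
    forall P, orth P -> - \tr (Q^T *m A) <= - \tr (P^T *m A).
  apply: orth_min.
  have -> : (fun v => - \tr ((mk v)^T *m A)) =
      (fun v => \sum_i \sum_k (mk v k i * (- A k i))).
    apply: funext => v; rewrite /mxtrace -sumrN; apply: eq_bigr => i _.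
    rewrite mxE -sumrN; apply: eq_bigr => k _; by rewrite !mxE mulrN.
  apply: cont_sum => i; apply: cont_sum => k; apply: cont_mul;
    [exact: cont_coord | exact: cst_continuous].
have Qmax' : forall P, orth P -> \tr (P^T *m A) <= \tr (Qs^T *m A).
  by move=> P hP; rewrite -lerN2; exact: Qmax.
have hO : frob (A - Qs) <= mdist A (@orth_set R n.+1).
  apply: lb_le_inf; first by exists (frob (A - Qs)); exists Qs.
  move=> _ [P hP <-].
  rewrite -(ler_pXn2r (n := 2)) // ?nnegrE ?frob_ge0 // !frob_orth //.
  by have := Qmax' P hP; lra.
have SOne : @sorth_set R n.+1 !=set0.
  by exists 1%:M; split; [exact: orth1 | exact: det1].
have mS0 := mdist_ge0 A SOne.
have fO0 : 0 <= frob (A - Qs) := frob_ge0 _.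
have hO2 : frob (A - Qs) ^+ 2 <= mdist A (@orth_set R n.+1) ^+ 2.
  by rewrite (ler_pXn2r (n := 2)) // ?nnegrE //; exact: le_trans hO.
case: (det_orth hQs) => dQ.
  have h1 : mdist A (@sorth_set R n.+1) <= frob (A - Qs) by apply: mdist_le; split.
  have : mdist A (@sorth_set R n.+1) ^+ 2 <= frob (A - Qs) ^+ 2.
    by rewrite (ler_pXn2r (n := 2)) // ?nnegrE.
  by lra.
pose B := Qs^T *m A.
have optB : Opt B.
  move=> P hP; rewrite /B mulmxA -trmx_mul; apply: Qmax'; exact: orthM.
have [P hP Pmin] := min_form B.
set u := P *m ev 0 in Pmin.
have hu : form 1%:M u u = 1.
  by rewrite /u -form_mulmx mulmx1 (orthTM hP) form1_ev eqxx.
have hu0 : form 1%:M u u != 0 by rewrite hu oner_eq0.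
set mu := form B u u in Pmin.
have mu0 : 0 <= mu.
  have := optB _ (hh_orth hu0); rewrite hh_sym tr_hh hu divr1 -/mu; lra.
have hmu : mu ^+ n.+1 <= \det B := keyL optB mu0 Pmin.
pose Q' := Qs *m hh u.
have hQ' : orth Q' := orthM hQs (hh_orth hu0).
have dQ' : \det Q' = 1 by rewrite det_mulmx dQ det_hh_P // mulN1r opprK.
have hS : mdist A (@sorth_set R n.+1) <= frob (A - Q') by apply: mdist_le; split.
have hS2 : mdist A (@sorth_set R n.+1) ^+ 2 <= frob (A - Q') ^+ 2.
  by rewrite (ler_pXn2r (n := 2)) // ?nnegrE ?frob_ge0.
have eqf : frob (A - Q') ^+ 2 = frob (A - Qs) ^+ 2 + 4 * mu.
  rewrite !frob_orth //.
  have -> : \tr (Q'^T *m A) = \tr B - 2 * mu.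
    by rewrite /Q' trmx_mul hh_sym -mulmxA tr_hh hu divr1.
  rewrite /B; lra.
have hmuA : 4 * mu <= extra.
  have dB : \det B = - \det A by rewrite /B det_mulmx det_tr dQ mulN1r.
  rewrite /extra; case: ifPn => hA.
    rewrite mulr1 ler_pM2l //.
    have -> : mu = (mu ^+ n.+1) `^ (n.+1%:R^-1).
      by rewrite -powR_mulrn // -powRrM mulfV ?powRr1 // pnatr_eq0.
    apply: ge0_ler_powR; rewrite ?invr_ge0 ?nnegrE ?exprn_ge0 ?normr_ge0 //.
    by rewrite ltr0_norm // -dB.
  have : mu ^+ n.+1 <= 0 by apply: (le_trans hmu); rewrite dB oppr_le0 leNgt.
  move=> hle; have /eqP : mu ^+ n.+1 = 0.
    by apply/eqP; rewrite eq_le hle exprn_ge0.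
  by rewrite expf_eq0 /= => /eqP ->; rewrite !mulr0.
by lra.
Qed.
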